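(* Let $\langle t,p\rangle$ be a TTP solution, $0<b<e<n$, and $t'=\mathrm{2OPT}(t,b,e)$. Suppose the sequences $\Pi(L(t,p))$ and $\Omega(H(t,p))$, the total weight $W(p)$, and the values $w_{t,p}(k)$, $\tau_{t,p}(k)$ for all positions $k$ are available. Let $p'$ be obtained from $p$ by the following procedure: first, for $k=b,\dots,e$ and each $i\in I(t'_k)$ with $p_i=1$ and $r_i<\Pi(L(t,p),k)$, set the entry of item $i$ to $0$; then, for $k=e,e-1,\dots,b$ and each $i\in I(t'_k)$ whose current entry is $0$ and with $r_i>\Omega(H(t,p),k)$, set the entry of item $i$ to $1$ provided the resulting plan still satisfies the knapsack constraint. Then computing $p'$ and then $N(t',p')$ takes $O\big(n-b+|I(t'[b,e])|\big)$ time in total, where $I(t'[b,e])=\bigcup_{k=b}^{e}I(t'_k)$.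
   Context: TTP setup. Cities $C=\{1,\dots,n\}$, $n>1$, symmetric distances $d(c,c')\ge0$. A cyclic tour is $t=\langle t_0,\dots,t_n\rangle$ with $t_0=t_n=1$ and $(t_1,\dots,t_{n-1})$ a permutation of $\{2,\dots,n\}$. Items $I=\{1,\dots,m\}$, item $i$ with weight $w_i>0$, profit $\pi_i>0$, city $l_i\in\{2,\dots,n\}$; $I(c)=\{i:l_i=c\}$. Collection plan $p\in\{0,1\}^m$, $W(p)=\sum_iw_ip_i$, $P(p)=\sum_i\pi_ip_i$, knapsack constraint $W(p)\le W$. $w_p(c)=\sum_{i\in I(c)}w_ip_i$, $w_{t,p}(k)=\sum_{k'=0}^k w_p(t_{k'})$, speed $s(w)=s_{\max}-\frac wW(s_{\max}-s_{\min})$ with $s_{\max}\ge s_{\min}>0$, $\tau_{t,p}(k)=\sum_{k'=0}^{k-1}d(t_{k'},t_{k'+1})/s(w_{t,p}(k'))$, $T(t,p)=\tau_{t,p}(n)$, $N(t,p)=P(p)-R\,T(t,p)$ with $R>0$. $\mathrm{2OPT}(t,b,e)$ is the tour $t'$ with $t'_{b+k}=t_{e-k}$ for $0\le k\le e-b$ and $t'_k=t_k$ otherwise. Item profitability ratio $r_i=\pi_i/w_i$. For $1\le k\le n-1$: $L(t,p,k)=\min\{r_i:i\in I(t_k),p_i=1\}$, $H(t,p,k)=\max\{r_i:i\in I(t_k),p_i=0\}$ (with $\min\emptyset=+\infty$, $\max\emptyset=-\infty$), $L(t,p)$ and $H(t,p)$ the corresponding sequences over $k=1,\dots,n-1$.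 Prefix minimum: $\Pi(s,1)=s_1$, $\Pi(s,k)=\min(\Pi(s,k-1),s_k)$; suffix maximum: $\Omega(s,N)=s_N$, $\Omega(s,k)=\max(s_k,\Omega(s,k+1))$; $\Pi(s)$, $\Omega(s)$ denote the resulting sequences. *)

(* Defs.v *)
From HB Require Import structures.
From mathcomp Require Import all_boot all_order all_algebra.
From mathcomp Require Import constructive_ereal.
Set Implicit Arguments. Unset Strict Implicit. Unset Printing Implicit Defensive.
Import Order.TTheory GRing.Theory Num.Theory.
Local Open Scope ring_scope.

(* TTP instance.  Cities are 1..n, items are 1..m.                     *)
Record ttp (R : realFieldType) := TTP {
  ncity : nat;
  nitem : nat;
  dist  : nat -> nat -> R;
  wt    : nat -> R;
  prof  : nat -> R;
  loc   : nat -> nat;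
  cap   : R;
  smax  : R;
  smin  : R;
  rent  : R
}.

Section TTPDefs.
Variable R : realFieldType.
Variable I : ttp R.

Definition valid_ttp : Prop :=
  (1 < ncity I)%N /\
  (forall c c', dist I c c' = dist I c' c) /\
  (forall c c', 0 <= dist I c c') /\
  (forall i, (1 <= i <= nitem I)%N ->
      [/\ 0 < wt I i, 0 < prof I i & (2 <= loc I i <= ncity I)%N]) /\
  0 < cap I /\ 0 < smin I /\ smin I <= smax I /\ 0 < rent I.

(* cyclic tour t = <t_0,...,t_n>, represented as a function on positions *)
Definition is_tour (t : nat -> nat) : Prop :=
  [/\ t 0%N = 1%N, t (ncity I) = 1%N &
      perm_eq [seq t k | k <- iota 1 (ncity I).-1] (iota 2 (ncity I).-1)].

Definition plan := nat -> bool.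

Definition items : seq nat := iota 1 (nitem I).
Definition items_at (c : nat) : seq nat := [seq i <- items | loc I i == c].

Definition bw (p : plan) i : R := if p i then wt I i else 0.
Definition bpi (p : plan) i : R := if p i then prof I i else 0.

Definition Wtot (p : plan) : R := \sum_(i <- items) bw p i.
Definition Ptot (p : plan) : R := \sum_(i <- items) bpi p i.
Definition feasible (p : plan) : Prop := Wtot p <= cap I.

Definition is_solution (t : nat -> nat) (p : plan) : Prop :=
  is_tour t /\ feasible p.

Definition wcity (p : plan) (c : nat) : R := \sum_(i <- items_at c) bw p i.
Definition wpos (t : nat -> nat) (p : plan) (k : nat) : R :=
  \sum_(0 <= k' < k.+1) wcity p (t k').
Definition speed (w : R) : R := smax I - w / cap I * (smax I - smin I).
Definition tau (t : nat -> nat) (p : plan) (k : nat) : R :=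
  \sum_(0 <= k' < k) dist I (t k') (t k'.+1) / speed (wpos t p k').
Definition Ttime t p : R := tau t p (ncity I).
Definition Nobj t p : R := Ptot p - rent I * Ttime t p.

Definition twoopt (t : nat -> nat) (b e : nat) : nat -> nat :=
  fun k => if (b <= k <= e)%N then t (e - (k - b))%N else t k.

Definition ratio i : R := prof I i / wt I i.

Local Open Scope ereal_scope.
(* L(t,p,k) and H(t,p,k) with min(empty)=+oo, max(empty)=-oo *)
Definition Lseq (t : nat -> nat) (p : plan) (k : nat) : \bar R :=
  \big[Order.min/+oo]_(i <- items_at (t k) | p i) (ratio i)%:E.
Definition Hseq (t : nat -> nat) (p : plan) (k : nat) : \bar R :=
  \big[Order.max/-oo]_(i <- items_at (t k) | ~~ p i) (ratio i)%:E.

(* prefix minimum Pi(s,k) (s indexed from 1): Pi(s,1)=s_1,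
   Pi(s,k)=min(Pi(s,k-1),s_k) *)
Fixpoint prefmin (s : nat -> \bar R) (k : nat) : \bar R :=
  match k with
  | 0 => +oo                         (* unused: k ranges over 1..N *)
  | 1 => s 1%N
  | k'.+1 => Order.min (prefmin s k') (s k)
  end.
Fixpoint sufmax_aux (s : nat -> \bar R) (N : nat) (j : nat) : \bar R :=
  (* j = N - k *)
  match j with
  | 0 => s N
  | j'.+1 => Order.max (s (N - j)%N) (sufmax_aux s N j')
  end.
Definition sufmax (s : nat -> \bar R) (N k : nat) : \bar R :=
  sufmax_aux s N (N - k)%N.

Definition PiL t p k := prefmin (Lseq t p) k.
Definition OmH t p k := sufmax (Hseq t p) (ncity I).-1 k.
Local Close Scope ereal_scope.

Definition setb (q : plan) (i : nat) (v : bool) : plan :=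
  fun j => if j == i then v else q j.

Definition phase1_spec (t : nat -> nat) (p : plan) (b e : nat) : plan :=
  let t' := twoopt t b e in
  foldl (fun q k =>
     foldl (fun q i =>
        if p i && ((ratio i)%:E < PiL t p k)%E then setb q i false else q)
       q (items_at (t' k)))
    p (iota b (e - b).+1).

Definition phase2_spec (t : nat -> nat) (p : plan) (b e : nat) (q0 : plan)
  : plan :=
  let t' := twoopt t b e in
  foldl (fun q k =>
     foldl (fun q i =>
        if ~~ q i && ((ratio i)%:E > OmH t p k)%E
           && (Wtot (setb q i true) <= cap I)
        then setb q i true else q)
       q (items_at (t' k)))
    q0 (rev (iota b (e - b).+1)).

Definition pprime (t : nat -> nat) (p : plan) (b e : nat) : plan :=
  phase2_spec t p b e (phase1_spec t p b e).

Definition nitems_seg (t : nat -> nat) (b e : nat) : nat :=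
  size [seq i <- items |
          loc I i \in [seq twoopt t b e k | k <- iota b (e - b).+1]].

(* The algorithm below works on the following data, each
   entry of which is accessible at unit cost: the instance arrays
   (dist, wt, prof, loc), the item lists I(c), the arrays t and p, and
   the precomputed data  PiLa k = Pi(L(t,p),k),  OmHa k = Omega(H(t,p),k),
   Wp = W(p),  wa k = w_{t,p}(k),  taua k = tau_{t,p}(k), and also
   Pp = P(p).  Every elementary step (one iteration of a
   loop, with O(1) arithmetic/comparisons/array accesses) costs one tick;
   the returned nat is the total number of ticks.                       *)

Record st := ST { cq : plan; cW : R; cP : R; ccost : nat }.

Definition alg_phase1 (t : nat -> nat) (b e : nat) (PiLa : nat -> \bar R)
  (s0 : st) : st :=
  let t' := twoopt t b e in
  foldl (fun s k =>
     foldl (fun s i =>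
        if cq s i && ((ratio i)%:E < PiLa k)%E
        then ST (setb (cq s) i false) (cW s - wt I i) (cP s - prof I i)
                (ccost s).+1
        else ST (cq s) (cW s) (cP s) (ccost s).+1)
       (ST (cq s) (cW s) (cP s) (ccost s).+1) (items_at (t' k)))
    s0 (iota b (e - b).+1).

Definition alg_phase2 (t : nat -> nat) (b e : nat) (OmHa : nat -> \bar R)
  (s0 : st) : st :=
  let t' := twoopt t b e in
  foldl (fun s k =>
     foldl (fun s i =>
        if ~~ cq s i && ((ratio i)%:E > OmHa k)%E && (cW s + wt I i <= cap I)
        then ST (setb (cq s) i true) (cW s + wt I i) (cP s + prof I i)
                (ccost s).+1
        else ST (cq s) (cW s) (cP s) (ccost s).+1)
       (ST (cq s) (cW s) (cP s) (ccost s).+1) (items_at (t' k)))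
    s0 (rev (iota b (e - b).+1)).

(* Evaluation of N(t',p'): positions < b are unchanged, so start from
   w_{t,p}(b-1) and tau_{t,p}(b-1), then walk along t' from b-1 to n. *)
Record st3 := ST3 { cw : R; ctime : R; ccost3 : nat }.

Definition alg_eval (t : nat -> nat) (b e : nat) (q : plan) (Wp Wq : R)
  (wa taua : nat -> R) : R * nat :=
  let t' := twoopt t b e in
  let s0 := ST3 (wa b.-1) (taua b.-1) 2 in
  let s := foldl (fun s k =>
      let time := ctime s + dist I (t' k) (t' k.+1) / speed (cw s) in
      if (k.+1 <= e)%N then
        foldl (fun s i => ST3 (cw s + bw q i) (ctime s) (ccost3 s).+1)
          (ST3 (cw s) time (ccost3 s).+1) (items_at (t' k.+1))
      else ST3 (wa k.+1 + (Wq - Wp)) time (ccost3 s).+1)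
    s0 (iota b.-1 (ncity I - b.-1)) in
  (ctime s, ccost3 s).

Definition algorithm (t : nat -> nat) (p : plan) (b e : nat)
  (PiLa OmHa : nat -> \bar R) (Wp Pp : R) (wa taua : nat -> R)
  : plan * R * nat :=
  let s1 := alg_phase1 t b e PiLa (ST p Wp Pp 0) in
  let s2 := alg_phase2 t b e OmHa s1 in
  let (T', c3) := alg_eval t b e (cq s2) Wp (cW s2) wa taua in
  (cq s2, cP s2 - rent I * T', (ccost s2 + c3)%N).

End TTPDefs.

(* Main.v *)
Require Import Defs.
From HB Require Import structures.
From mathcomp Require Import all_boot all_order all_algebra.
From mathcomp Require Import constructive_ereal.
From Stdlib Require Import FunctionalExtensionality.
From mathcomp Require Import zify ring lra.
Set Implicit Arguments. Unset Strict Implicit. Unset Printing Implicit Defensive.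
Import Order.TTheory GRing.Theory Num.Theory.
Local Open Scope ring_scope.

Lemma uniq_map_inj (T1 T2 : eqType) (f : T1 -> T2) (s : seq T1) x y :
  uniq (map f s) -> x \in s -> y \in s -> f x = f y -> x = y.
Proof.
elim: s => [//|a s IH] /= /andP[Ha Hu].
rewrite !in_cons => /orP[/eqP->|Hx] /orP[/eqP->|Hy] //.
- move=> Hf; case/negP: Ha; rewrite Hf; exact: map_f.
- move=> Hf; case/negP: Ha; rewrite -Hf; exact: map_f.
- exact: IH.
Qed.

Lemma count_cities (s L : seq nat) (loc : nat -> nat) : uniq L ->
  (\sum_(c <- L) count (fun i => loc i == c) s)%N = count (fun i => loc i \in L) s.
Proof.
elim: L => [|c L IH] /=.
  by rewrite big_nil; elim: s => //= x s <-; rewrite in_nil.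
move=> /andP[HcL Hu]; rewrite big_cons IH //.
rewrite -[RHS]addn0 -(count_pred0 s).
have -> : count pred0 s = count (predI (fun i => loc i == c) (fun i => loc i \in L)) s.
  apply: (eq_count _ s) => i /=; apply/esym/negP => /andP[/eqP Hi]; rewrite Hi.
  by apply/negP.
rewrite -count_predUI; congr (_ + _); apply: (eq_count _ s) => i /=; by rewrite in_cons.
Qed.

Lemma sum_cities (V : nmodType) (s L : seq nat) (loc : nat -> nat) (F : nat -> V) :
  uniq L ->
  \sum_(c <- L) \sum_(i <- s | loc i == c) F i = \sum_(i <- s | loc i \in L) F i.
Proof.
elim: L => [|c L IH] /=.
  by rewrite big_nil big_pred0 // => i; rewrite in_nil.
move=> /andP[HcL Hu]; rewrite big_cons IH //.
rewrite (bigID (fun i => loc i == c) (fun i => loc i \in c :: L)) /=.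
congr (_ + _); apply: eq_bigl => i; rewrite in_cons.
  by case: (loc i == c); rewrite ?andbF ?andbT.
case H: (loc i == c) => /=; last by rewrite andbT.
by move/eqP: H => ->; rewrite (negbTE HcL).
Qed.

Section S.
Variable R : realFieldType.
Variable I : ttp R.

Lemma items_uniq : uniq (items I).
Proof. exact: iota_uniq. Qed.

Lemma sum_setb (F : nat -> bool -> R) (q : plan) i v :
  i \in items I ->
  \sum_(j <- items I) F j (setb q i v j) =
  \sum_(j <- items I) F j (q j) - F i (q i) + F i v.
Proof.
move=> Hi.
rewrite (bigD1_seq i Hi items_uniq) (bigD1_seq i Hi items_uniq) /= /setb eqxx.
rewrite (eq_bigr (fun j => F j (q j))); last by move=> j /negbTE ->.
by rewrite [F i (q i) + _]addrC addrK addrC.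
Qed.

Lemma Wtot_setb q i v : i \in items I ->
  Wtot I (setb q i v) = Wtot I q - bw I q i + (if v then wt I i else 0).
Proof.
move=> Hi; rewrite /Wtot /bw.
exact: (sum_setb (fun j b => if b then wt I j else 0)).
Qed.

Lemma Ptot_setb q i v : i \in items I ->
  Ptot I (setb q i v) = Ptot I q - bpi I q i + (if v then prof I i else 0).
Proof.
move=> Hi; rewrite /Ptot /bpi.
exact: (sum_setb (fun j b => if b then prof I j else 0)).
Qed.

Lemma tour_range t j : is_tour I t -> (1 <= j <= (ncity I).-1)%N ->
  (2 <= t j <= ncity I)%N.
Proof.
move=> [_ _ Hp] Hj.
have : t j \in iota 2 (ncity I).-1.
  rewrite -(perm_mem Hp); apply: map_f; rewrite mem_iota; lia.
rewrite mem_iota; lia.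
Qed.

Lemma tour_inj t j1 j2 : is_tour I t -> (1 <= j1 <= (ncity I).-1)%N ->
  (1 <= j2 <= (ncity I).-1)%N -> t j1 = t j2 -> j1 = j2.
Proof.
move=> [_ _ Hp] H1 H2.
apply: (uniq_map_inj (s := iota 1 (ncity I).-1)).
- by rewrite (perm_uniq Hp) iota_uniq.
- rewrite mem_iota; lia.
- rewrite mem_iota; lia.
Qed.

End S.


Section S2.
Variable R : realFieldType.
Variable I : ttp R.

Definition p1_in (PiLa : nat -> \bar R) (k : nat) : st R -> nat -> st R :=
  fun s i =>
        if cq s i && ((Defs.ratio I i)%:E < PiLa k)%E
        then ST (setb (cq s) i false) (cW s - wt I i) (cP s - prof I i)
                (ccost s).+1
        else ST (cq s) (cW s) (cP s) (ccost s).+1.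
Definition p1_out t b e PiLa : st R -> nat -> st R :=
  fun s k => foldl (p1_in PiLa k) (ST (cq s) (cW s) (cP s) (ccost s).+1)
               (items_at I (twoopt t b e k)).
Lemma alg_phase1E t b e PiLa s0 :
  alg_phase1 I t b e PiLa s0 = foldl (p1_out t b e PiLa) s0 (iota b (e - b).+1).
Proof. by []. Qed.

Definition p2_in (OmHa : nat -> \bar R) (k : nat) : st R -> nat -> st R :=
  fun s i =>
        if ~~ cq s i && ((Defs.ratio I i)%:E > OmHa k)%E && (cW s + wt I i <= cap I)
        then ST (setb (cq s) i true) (cW s + wt I i) (cP s + prof I i)
                (ccost s).+1
        else ST (cq s) (cW s) (cP s) (ccost s).+1.
Definition p2_out t b e OmHa : st R -> nat -> st R :=
  fun s k => foldl (p2_in OmHa k) (ST (cq s) (cW s) (cP s) (ccost s).+1)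
               (items_at I (twoopt t b e k)).
Lemma alg_phase2E t b e OmHa s0 :
  alg_phase2 I t b e OmHa s0 = foldl (p2_out t b e OmHa) s0 (rev (iota b (e - b).+1)).
Proof. by []. Qed.

Definition s1_in t p k : plan -> nat -> plan :=
  fun q i => if p i && ((Defs.ratio I i)%:E < PiL I t p k)%E then setb q i false else q.
Definition s1_out t p b e : plan -> nat -> plan :=
  fun q k => foldl (s1_in t p k) q (items_at I (twoopt t b e k)).
Lemma phase1E t p b e :
  phase1_spec I t p b e = foldl (s1_out t p b e) p (iota b (e - b).+1).
Proof. by []. Qed.

Definition s2_in t p k : plan -> nat -> plan :=
  fun q i => if ~~ q i && ((Defs.ratio I i)%:E > OmH I t p k)%E
           && (Wtot I (setb q i true) <= cap I) then setb q i true else q.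
Definition s2_out t p b e : plan -> nat -> plan :=
  fun q k => foldl (s2_in t p k) q (items_at I (twoopt t b e k)).
Lemma phase2E t p b e q0 :
  phase2_spec I t p b e q0 = foldl (s2_out t p b e) q0 (rev (iota b (e - b).+1)).
Proof. by []. Qed.

Lemma p1_in_cost PiLa k l s :
  ccost (foldl (p1_in PiLa k) s l) = (ccost s + size l)%N.
Proof.
elim: l s => [|i l IH] s /=; first by rewrite addn0.
rewrite IH /p1_in; case: ifP => _ /=; lia.
Qed.
Lemma p2_in_cost OmHa k l s :
  ccost (foldl (p2_in OmHa k) s l) = (ccost s + size l)%N.
Proof.
elim: l s => [|i l IH] s /=; first by rewrite addn0.
rewrite IH /p2_in; case: ifP => _ /=; lia.
Qed.
Lemma p1_out_cost t b e PiLa ks s :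
  ccost (foldl (p1_out t b e PiLa) s ks) =
  (ccost s + \sum_(k <- ks) (size (items_at I (twoopt t b e k))).+1)%N.
Proof.
elim: ks s => [|k ks IH] s /=; first by rewrite big_nil addn0.
rewrite IH big_cons /p1_out p1_in_cost /=; lia.
Qed.
Lemma p2_out_cost t b e OmHa ks s :
  ccost (foldl (p2_out t b e OmHa) s ks) =
  (ccost s + \sum_(k <- ks) (size (items_at I (twoopt t b e k))).+1)%N.
Proof.
elim: ks s => [|k ks IH] s /=; first by rewrite big_nil addn0.
rewrite IH big_cons /p2_out p2_in_cost /=; lia.
Qed.

Definition Inv1 (p : plan) (S : seq nat) (s : st R) (q : plan) : Prop :=
  [/\ cq s = q, cW s = Wtot I q, cP s = Ptot I q, (forall j, q j -> p j)
    & (forall j, q j != p j -> loc I j \in S)].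

Lemma setb_id (q : plan) i : q i = false -> setb q i false = q.
Proof.
move=> H; apply: functional_extensionality => j; rewrite /setb.
by case: eqP => // ->.
Qed.
Lemma setb_id' (q : plan) i v : q i = v -> setb q i v = q.
Proof.
move=> H; apply: functional_extensionality => j; rewrite /setb.
by case: eqP => // ->.
Qed.

Lemma p1_in_inv t p k PiLa S l s q :
  (forall i, i \in l -> i \in items I /\ loc I i \in S) ->
  PiLa k = PiL I t p k -> Inv1 p S s q ->
  Inv1 p S (foldl (p1_in PiLa k) s l) (foldl (s1_in t p k) q l).
Proof.
move=> Hl Hk; elim: l s q Hl => [|i l IH] s q Hl //= Hinv.
have [Hi HS] := Hl i (mem_head _ _).
apply: IH; first by move=> j Hj; apply: Hl; rewrite in_cons Hj orbT.
case: Hinv => Hq HW HP Hle Hg.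
rewrite /p1_in /s1_in Hq Hk.
case Hqi: (q i).
- rewrite (Hle _ Hqi) /=.
  case: ifP => _; last by split.
  split => //=.
  + by rewrite HW Wtot_setb // /bw Hqi addr0.
  + by rewrite HP Ptot_setb // /bpi Hqi addr0.
  + by move=> j; rewrite /setb; case: (j == i) => //; apply: Hle.
  + move=> j; rewrite /setb; case: (eqVneq j i) => [->|_] //; exact: Hg.
- rewrite andFb.
  case: ifP => _; last by split.
  by rewrite setb_id //; split.
Qed.

Definition Inv2 (p : plan) (S : seq nat) (s : st R) (q : plan) : Prop :=
  [/\ cq s = q, cW s = Wtot I q, cP s = Ptot I q
    & (forall j, q j != p j -> loc I j \in S)].

Lemma p2_in_inv t p k OmHa S l s q :
  (forall i, i \in l -> i \in items I /\ loc I i \in S) ->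
  OmHa k = OmH I t p k -> Inv2 p S s q ->
  Inv2 p S (foldl (p2_in OmHa k) s l) (foldl (s2_in t p k) q l).
Proof.
move=> Hl Hk; elim: l s q Hl => [|i l IH] s q Hl //= Hinv.
have [Hi HS] := Hl i (mem_head _ _).
apply: IH; first by move=> j Hj; apply: Hl; rewrite in_cons Hj orbT.
case: Hinv => Hq HW HP Hg.
rewrite /p2_in /s2_in Hq Hk.
case Hqi: (q i) => /=; first by split.
have HWs : Wtot I (setb q i true) = Wtot I q + wt I i.
  by rewrite Wtot_setb // /bw Hqi subr0.
rewrite HWs -HW.
case: ifP => _; last by split.
split => //=.
+ by rewrite HWs HW.
+ by rewrite HP Ptot_setb // /bpi Hqi subr0.
+ move=> j; rewrite /setb; case: (eqVneq j i) => [->|_] //; exact: Hg.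
Qed.

Lemma p1_out_inv t p b e PiLa ks s q :
  (forall k, k \in ks -> k \in iota b (e - b).+1) ->
  (forall k, k \in ks -> PiLa k = PiL I t p k) ->
  Inv1 p [seq twoopt t b e k | k <- iota b (e - b).+1] s q ->
  Inv1 p [seq twoopt t b e k | k <- iota b (e - b).+1]
    (foldl (p1_out t b e PiLa) s ks) (foldl (s1_out t p b e) q ks).
Proof.
elim: ks s q => [|k ks IH] s q //= Hks HPi Hinv.
apply: IH.
- by move=> j Hj; apply: Hks; rewrite in_cons Hj orbT.
- by move=> j Hj; apply: HPi; rewrite in_cons Hj orbT.
rewrite /p1_out /s1_out; apply: p1_in_inv.
- move=> i; rewrite /items_at mem_filter => /andP[/eqP Hl Hi]; split => //.
  by rewrite Hl; apply: map_f; apply: Hks; exact: mem_head.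
- by apply: HPi; exact: mem_head.
- by case: Hinv.
Qed.

Lemma p2_out_inv t p b e OmHa ks s q :
  (forall k, k \in ks -> k \in iota b (e - b).+1) ->
  (forall k, k \in ks -> OmHa k = OmH I t p k) ->
  Inv2 p [seq twoopt t b e k | k <- iota b (e - b).+1] s q ->
  Inv2 p [seq twoopt t b e k | k <- iota b (e - b).+1]
    (foldl (p2_out t b e OmHa) s ks) (foldl (s2_out t p b e) q ks).
Proof.
elim: ks s q => [|k ks IH] s q //= Hks HOm Hinv.
apply: IH.
- by move=> j Hj; apply: Hks; rewrite in_cons Hj orbT.
- by move=> j Hj; apply: HOm; rewrite in_cons Hj orbT.
rewrite /p2_out /s2_out; apply: p2_in_inv.
- move=> i; rewrite /items_at mem_filter => /andP[/eqP Hl Hi]; split => //.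
  by rewrite Hl; apply: map_f; apply: Hks; exact: mem_head.
- by apply: HOm; exact: mem_head.
- by case: Hinv.
Qed.

End S2.


Section S3.
Variable R : realFieldType.
Variable I : ttp R.

Definition ev_in (q : plan) : st3 R -> nat -> st3 R :=
  fun s i => ST3 (cw s + bw I q i) (ctime s) (ccost3 s).+1.
Definition ev_step t b e (q : plan) (Wp Wq : R) (wa : nat -> R) : st3 R -> nat -> st3 R :=
  fun s k =>
      let time := ctime s + dist I (twoopt t b e k) (twoopt t b e k.+1) / speed I (cw s) in
      if (k.+1 <= e)%N then
        foldl (ev_in q) (ST3 (cw s) time (ccost3 s).+1) (items_at I (twoopt t b e k.+1))
      else ST3 (wa k.+1 + (Wq - Wp)) time (ccost3 s).+1.

Lemma alg_evalE t b e q Wp Wq wa taua :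
  alg_eval I t b e q Wp Wq wa taua =
  let s := foldl (ev_step t b e q Wp Wq wa) (ST3 (wa b.-1) (taua b.-1) 2)
             (iota b.-1 (ncity I - b.-1)) in (ctime s, ccost3 s).
Proof. by []. Qed.

Lemma ev_in_fold q l s :
  foldl (ev_in q) s l = ST3 (cw s + \sum_(i <- l) bw I q i) (ctime s) (ccost3 s + size l).
Proof.
elim: l s => [|i l IH] s /=; first by rewrite big_nil addr0 addn0; case: s.
by rewrite IH /= big_cons addrA addSnnS.
Qed.

Lemma ev_cost t b e q Wp Wq wa l s :
  ccost3 (foldl (ev_step t b e q Wp Wq wa) s l) =
  (ccost3 s + \sum_(k <- l) (if (k.+1 <= e)%N then
        (size (items_at I (twoopt t b e k.+1))).+1 else 1))%N.
Proof.
elim: l s => [|k l IH] s /=; first by rewrite big_nil addn0.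
rewrite IH big_cons /ev_step; case: ifP => _; rewrite ?ev_in_fold /=; lia.
Qed.

Lemma ev_loop t b e q Wp Wq wa m a s :
  (forall k, (e <= k)%N -> (k < ncity I)%N ->
     wa k.+1 + (Wq - Wp) = wpos I (twoopt t b e) q k.+1) ->
  (a + m <= ncity I)%N ->
  cw s = wpos I (twoopt t b e) q a -> ctime s = tau I (twoopt t b e) q a ->
  let s' := foldl (ev_step t b e q Wp Wq wa) s (iota a m) in
  cw s' = wpos I (twoopt t b e) q (a + m) /\
  ctime s' = tau I (twoopt t b e) q (a + m).
Proof.
move=> HK; elim: m a s => [|m IH] a s Ham Hw Ht /=; first by rewrite addn0.
rewrite -addSnnS; apply: IH; first lia.
- rewrite /ev_step; case: ifP => He.
  + by rewrite ev_in_fold /= Hw /wpos [in RHS]big_nat_recr.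
  + by apply: HK; lia.
- rewrite /ev_step; case: ifP => He; rewrite ?ev_in_fold /= Ht Hw /tau [in RHS]big_nat_recr //=.
Qed.

End S3.


Section S4.
Variable R : realFieldType.
Variable I : ttp R.
Variables (t : nat -> nat) (p q : plan) (b e : nat).
Hypothesis Ht : is_tour I t.
Hypothesis Hb : (0 < b)%N.
Hypothesis Hbe : (b < e)%N.
Hypothesis Hen : (e < ncity I)%N.

Let Sx := [seq twoopt t b e k | k <- iota b (e - b).+1].

Lemma twoopt_in k : (b <= k <= e)%N -> twoopt t b e k = t (e - (k - b))%N.
Proof. by rewrite /twoopt => ->. Qed.
Lemma twoopt_out k : ~~ (b <= k <= e)%N -> twoopt t b e k = t k.
Proof. by rewrite /twoopt => /negbTE ->. Qed.

Lemma memSx c : c \in Sx -> exists k, (b <= k <= e)%N /\ c = t k.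
Proof.
move=> /mapP[k]; rewrite mem_iota => Hk ->.
exists (e - (k - b))%N; split; first lia.
apply: twoopt_in; lia.
Qed.

Lemma notin_Sx j : (j <= ncity I)%N -> ~~ (b <= j <= e)%N -> t j \notin Sx.
Proof.
move=> Hj Hnj; apply/negP => /memSx [k [Hk Htk]].
have Hr := tour_range Ht (j := k) ltac:(lia).
case: Ht => [H0 Hn _].
have [Hj0|Hj0] := boolP ((j == 0) || (j == ncity I))%N.
  case/orP: Hj0 => /eqP Hj0; subst j; [rewrite H0 in Htk| rewrite Hn in Htk]; lia.
have := tour_inj Ht (j1 := j) (j2 := k) ltac:(lia) ltac:(lia) Htk; lia.
Qed.

Lemma uniq_Sx : uniq Sx.
Proof.
rewrite map_inj_in_uniq ?iota_uniq // => k1 k2; rewrite !mem_iota => H1 H2.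
rewrite !twoopt_in; try lia.
move=> /(tour_inj Ht) H; have := H ltac:(lia) ltac:(lia); lia.
Qed.

Hypothesis Hg : forall j, q j != p j -> loc I j \in Sx.

Lemma wcity_eq j : (j <= ncity I)%N -> ~~ (b <= j <= e)%N ->
  wcity I q (t j) = wcity I p (t j).
Proof.
move=> Hj Hnj; apply: eq_big_seq => i; rewrite /items_at mem_filter => /andP[/eqP Hl _].
rewrite /bw; have [->//|Hne] := eqVneq (q i) (p i).
have := Hg Hne; rewrite Hl => H; by rewrite (negbTE (notin_Sx Hj Hnj)) in H.
Qed.

Lemma wpos_pre m : (m < b)%N -> wpos I (twoopt t b e) q m = wpos I t p m.
Proof.
move=> Hm; apply: eq_big_nat => k Hk.
rewrite twoopt_out; last lia.
apply: wcity_eq; lia.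
Qed.

Lemma tau_pre m : (m < b)%N -> tau I (twoopt t b e) q m = tau I t p m.
Proof.
move=> Hm; apply: eq_big_nat => k Hk.
rewrite wpos_pre; last lia.
rewrite !twoopt_out //; lia.
Qed.

Lemma sum_mid (F : nat -> R) :
  \sum_(b <= k < e.+1) F (twoopt t b e k) = \sum_(b <= k < e.+1) F (t k).
Proof.
rewrite big_nat_rev; apply: eq_big_nat => k Hk.
rewrite twoopt_in; last lia.
congr (F (t _)); lia.
Qed.

Lemma sum_mid_items (F : plan -> nat -> R) (qq : plan) :
  \sum_(b <= k < e.+1) \sum_(i <- items_at I (twoopt t b e k)) F qq i =
  \sum_(i <- items I | loc I i \in Sx) F qq i.
Proof.
rewrite -(sum_cities _ _ _ uniq_Sx) big_map.
have -> : index_iota b e.+1 = iota b (e - b).+1 by rewrite /index_iota; congr iota; lia.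
by apply: eq_bigr => k _; rewrite /items_at big_filter.
Qed.

Lemma K1 k : (e <= k)%N -> (k < ncity I)%N ->
  wpos I (twoopt t b e) q k.+1 = wpos I t p k.+1 + (Wtot I q - Wtot I p).
Proof.
move=> Hk Hkn.
have Hs : forall F : nat -> R, \sum_(0 <= i < k.+2) F i =
   \sum_(0 <= i < b) F i + \sum_(b <= i < e.+1) F i + \sum_(e.+1 <= i < k.+2) F i.
  move=> F; rewrite -addrA -big_cat_nat; try lia.
  rewrite -big_cat_nat //; lia.
rewrite /wpos !Hs.
have HA : \sum_(0 <= i < b) wcity I q (twoopt t b e i) = \sum_(0 <= i < b) wcity I p (t i).
  apply: eq_big_nat => i Hi; rewrite twoopt_out; last lia; apply: wcity_eq; lia.
have HB : \sum_(e.+1 <= i < k.+2) wcity I q (twoopt t b e i) =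
          \sum_(e.+1 <= i < k.+2) wcity I p (t i).
  apply: eq_big_nat => i Hi; rewrite twoopt_out; last lia; apply: wcity_eq; lia.
have HMq : \sum_(b <= i < e.+1) wcity I q (twoopt t b e i) =
           \sum_(i <- items I | loc I i \in Sx) bw I q i.
  exact: (sum_mid_items (bw I)).
have HMp : \sum_(b <= i < e.+1) wcity I p (t i) =
           \sum_(i <- items I | loc I i \in Sx) bw I p i.
  by rewrite -(sum_mid (wcity I p)); exact: (sum_mid_items (bw I)).
have HWq : Wtot I q = \sum_(i <- items I | loc I i \in Sx) bw I q i +
                      \sum_(i <- items I | loc I i \notin Sx) bw I q i.
  exact: bigID.
have HWp : Wtot I p = \sum_(i <- items I | loc I i \in Sx) bw I p i +
                      \sum_(i <- items I | loc I i \notin Sx) bw I q i.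
  rewrite /Wtot (bigID (fun i => loc I i \in Sx)) /=; congr (_ + _).
  apply: eq_bigr => i Hi; rewrite /bw; have [->//|Hne] := eqVneq (q i) (p i).
  by rewrite (Hg Hne) in Hi.
rewrite HA HB HMq HMp HWq HWp; lra.
Qed.

Lemma seg_count :
  nitems_seg I t b e = (\sum_(k <- iota b (e - b).+1) size (items_at I (twoopt t b e k)))%N.
Proof.
rewrite /nitems_seg size_filter -(count_cities _ _ uniq_Sx) big_map.
by apply: eq_bigr => k _; rewrite /items_at size_filter.
Qed.

End S4.

Unset Implicit Arguments.

Lemma sum_succ (T : Type) (f : T -> nat) (l : seq T) :
  (\sum_(k <- l) (f k).+1 = \sum_(k <- l) f k + size l)%N.
Proof. elim: l => [|x l IH]; rewrite ?big_nil ?big_cons //= IH; lia. Qed.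

Lemma sum_if (f : nat -> nat) (P : nat -> bool) (l : seq nat) :
  (\sum_(k <- l) (if P k then (f k).+1 else 1) =
   \sum_(k <- l) (if P k then f k else 0) + size l)%N.
Proof. elim: l => [|x l IH]; rewrite ?big_nil ?big_cons //= IH; case: (P x); lia. Qed.

Theorem mainTheorem11 :
  exists C : nat,
  forall (R : realFieldType) (I : ttp R) (t : nat -> nat) (p : plan) (b e : nat)
    (PiLa OmHa : nat -> \bar R) (Wp Pp : R) (wa taua : nat -> R),
    valid_ttp I ->
    is_solution I t p ->
    (0 < b)%N -> (b < e)%N -> (e < ncity I)%N ->
    (forall k, (1 <= k <= (ncity I).-1)%N -> PiLa k = PiL I t p k) ->
    (forall k, (1 <= k <= (ncity I).-1)%N -> OmHa k = OmH I t p k) ->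
    Wp = Wtot I p ->
    Pp = Ptot I p ->
    (forall k, (k <= ncity I)%N -> wa k = wpos I t p k) ->
    (forall k, (k <= ncity I)%N -> taua k = tau I t p k) ->
    let '(q, Nval, cost) := algorithm I t p b e PiLa OmHa Wp Pp wa taua in
    (forall i, q i = pprime I t p b e i) /\
    Nval = Nobj I (twoopt t b e) (pprime I t p b e) /\
    (cost <= C * (ncity I - b + nitems_seg I t b e))%N.
Proof.
exists 6%N => R I t p b e PiLa OmHa Wp Pp wa taua _ [Ht _] Hb Hbe Hen HPi HOm HWp HPp Hwa Hta.
set S := [seq twoopt t b e k | k <- iota b (e - b).+1].
have Hks : forall k, k \in iota b (e - b).+1 -> (1 <= k <= (ncity I).-1)%N.
  move=> k; rewrite mem_iota; lia.
set s1 := alg_phase1 I t b e PiLa (ST p Wp Pp 0).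
have H1 : Inv1 I p S s1 (phase1_spec I t p b e).
  rewrite /s1 alg_phase1E phase1E; apply: p1_out_inv => //.
  - by move=> k Hk; apply: HPi; apply: Hks.
  - by split => // j; rewrite eqxx.
set s2 := alg_phase2 I t b e OmHa s1.
have H2 : Inv2 I p S s2 (pprime I t p b e).
  rewrite /s2 alg_phase2E /pprime phase2E; apply: p2_out_inv => //.
  - by move=> k; rewrite mem_rev.
  - by move=> k; rewrite mem_rev => Hk; apply: HOm; apply: Hks.
  - by case: H1 => *; split.
case: H2 => Hq2 HW2 HP2 Hg2.
rewrite /algorithm -/s1 -/s2 alg_evalE /=.
have Hb1 : (b.-1 + (ncity I - b.-1))%N = ncity I by lia.
set q2 := pprime I t p b e.
have HK : forall k, (e <= k)%N -> (k < ncity I)%N ->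
     wa k.+1 + (cW s2 - Wp) = wpos I (twoopt t b e) q2 k.+1.
  move=> k Hk Hkn; rewrite Hwa // HW2 HWp (K1 Ht Hb Hbe Hen Hg2) //.
have Hw0 : cw (ST3 (wa b.-1) (taua b.-1) 2) = wpos I (twoopt t b e) q2 b.-1.
  by rewrite /= Hwa ?(wpos_pre Ht Hb Hbe Hen Hg2) //; lia.
have Ht0 : ctime (ST3 (wa b.-1) (taua b.-1) 2) = tau I (twoopt t b e) q2 b.-1.
  by rewrite /= Hta ?(tau_pre Ht Hb Hbe Hen Hg2) //; lia.
have [_ Hct] := ev_loop (t := t) (b := b) (e := e) (q := q2) (Wp := Wp) (Wq := cW s2)
   (wa := wa) (m := (ncity I - b.-1)%N) (a := b.-1) HK ltac:(lia) Hw0 Ht0.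
split; first by rewrite Hq2.
split.
  by rewrite Hq2 Hct Hb1 HP2.
set g := fun k => size (items_at I (twoopt t b e k)).
have Hif : (\sum_(k <- iota b.-1 (ncity I - b.-1)) (if (k.+1 <= e)%N then g k.+1 else 0)
           = \sum_(k <- iota b (e - b).+1) g k)%N.
  have -> : (ncity I - b.-1 = (e - b).+1 + (ncity I - e))%N by lia.
  rewrite iotaD big_cat.
  have -> : (\sum_(k <- iota (b.-1 + (e - b).+1) (ncity I - e))
      (if (k.+1 <= e)%N then g k.+1 else 0) = 0)%N.
    apply: big1_seq => k /andP[_]; rewrite mem_iota => Hk; case: ifP => //; lia.
  have Hio : iota b (e - b).+1 = map (addn 1) (iota b.-1 (e - b).+1).
    by rewrite -iotaDl; congr iota; lia.
  rewrite Hio big_map; apply: (etrans (addn0 _)); apply: eq_big_seq => k; rewrite mem_iota => Hk.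
  case: ifP => [_|/negbT Hke]; [by rewrite add1n | lia].
rewrite ev_cost /s2 p2_out_cost /s1 p1_out_cost big_rev !sum_succ.
rewrite (sum_if (fun k => g k.+1) (fun k => k.+1 <= e)%N) Hif !size_iota.
rewrite (seg_count Ht Hb Hbe Hen) -/g.
set X := (\sum_(k <- iota b (e - b).+1) g k)%N.
rewrite /=; lia.
Qed.
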